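(* Let $b\ge2$ be an integer, $\gamma\in(0,1)$, and let $\phi$ be a $\mathbb{Z}$-periodic Lipschitz function satisfying condition (H). Then for every $x\in[0,1]$ the measure $m_x$ has no atoms.
   Context: $\Lambda=\{0,\dots,b-1\}$, $\Sigma=\Lambda^{\mathbb{Z}_+}$, $\nu$ uniform on $\Lambda$. $S(x,\mathbf{j})=\sum_{n\ge1}\gamma^{n-1}\phi\big(\frac{x+j_1+j_2b+\cdots+j_nb^{n-1}}{b^n}\big)$ for $\mathbf{j}\in\Sigma$, $x\in[0,1]$. Condition (H): for all $\mathbf{i}\neq\mathbf{j}\in\Sigma$, $x\mapsto S(x,\mathbf{j})-S(x,\mathbf{i})$ is not identically zero on $[0,1]$. $m_x$ is the image of $\nu^{\mathbb{Z}_+}$ under $\mathbf{j}\mapsto S(x,\mathbf{j})$. *)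

(* Defs.v *)
From HB Require Import structures.
From mathcomp Require Import all_boot all_order all_algebra.
From mathcomp Require Import all_classical all_reals all_analysis.
Set Implicit Arguments. Unset Strict Implicit. Unset Printing Implicit Defensive.
Import Order.TTheory GRing.Theory Num.Theory.
Import numFieldNormedType.Exports.
Local Open Scope classical_set_scope.
Local Open Scope ring_scope.

(* Sigma = Lambda^{Z_+}, Lambda = {0,...,b-1}; a sequence j_1 j_2 ... is
   encoded as j : nat -> 'I_b with j_k = j (k-1). *)
Definition seqspace (b : nat) := nat -> 'I_b.

Definition cylinder (b n : nat) (w : 'I_n -> 'I_b) : set (seqspace b) :=
  [set j | forall k : 'I_n, j (nat_of_ord k) = w k].

Definition cylinders (b : nat) : set (set (seqspace b)) :=
  [set C | exists n (w : 'I_n -> 'I_b), C = cylinder w].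

HB.instance Definition _ (c : nat) := isPointed.Build 'I_c.+2 ord0.

(* g_sigma_algebraType needs a pointed carrier, so Sigma is only formed for
   alphabets 'I_b with b >= 2 given as b = c.+2. *)
Notation Sigma c := (g_sigma_algebraType (@cylinders c.+2)).

(* The infinite product measure nu^{Z_+} of the uniform measure on Lambda:
   a probability measure giving mass b^{-n} to every cylinder of length n.
   (By the pi-lambda theorem it is the unique such measure.) *)
Definition is_uniform_product (R : realType) (c : nat)
  (P : probability (Sigma c) R) : Prop :=
  forall (n : nat) (w : 'I_n -> 'I_c.+2),
    P (cylinder w) = ((c.+2%:R ^- n : R)%:E).

Definition S_term (R : realType) (b : nat) (gamma : R) (phi : R -> R)
  (x : R) (j : seqspace b) (n : nat) : R :=
  gamma ^+ n.-1 *
  phi ((x + \sum_(1 <= k < n.+1) (j k.-1)%:R * b%:R ^+ k.-1) / b%:R ^+ n).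

Arguments S_term {R} b gamma phi x j n.

Definition S (R : realType) (b : nat) (gamma : R) (phi : R -> R)
  (x : R) (j : seqspace b) : R :=
  limn (fun N : nat => \sum_(1 <= n < N) S_term b gamma phi x j n).

Arguments S {R} b gamma phi x j.

Definition periodic1 (R : realType) (phi : R -> R) : Prop :=
  forall u, phi (u + 1) = phi u.

Definition condH (R : realType) (b : nat) (gamma : R) (phi : R -> R) : Prop :=
  forall i j : seqspace b, i <> j ->
    exists2 x : R, 0 <= x <= 1 & S b gamma phi x j - S b gamma phi x i != 0.

Arguments condH {R} b gamma phi.

Definition m_x (R : realType) (c : nat) (gamma : R) (phi : R -> R)
  (P : probability (Sigma c) R) (x : R) : set R -> \bar R :=
  pushforward P (fun j : Sigma c => S c.+2 gamma phi x j).

Arguments m_x {R} c gamma phi P x.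

(* Main.v *)
Require Import Defs.
From HB Require Import structures.
From mathcomp Require Import all_boot all_order all_algebra.
From mathcomp Require Import all_classical all_reals all_analysis.
From mathcomp Require Import ring lra zify.
Import Order.TTheory GRing.Theory Num.Theory.
Import numFieldNormedType.Exports.
Local Open Scope classical_set_scope.
Local Open Scope ring_scope.

Section Analysis.
Context (R : realType) (c : nat) (gamma : R) (phi : R -> R) (M : R).
Hypothesis g0 : 0 < gamma.
Hypothesis g1 : gamma < 1.
Hypothesis M0 : 0 <= M.
Hypothesis Lip : forall u v, `|phi u - phi v| <= M * `|u - v|.

Local Notation b := c.+2.

Definition wval (L : nat) (j : nat -> 'I_b) : nat := \sum_(k < L) j k * b ^ k.

Lemma val_lt L j : (wval L j < b ^ L)%N.
Proof.
elim: L => [|L IH]; first by rewrite /wval big_ord0 expn0.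
rewrite /wval big_ord_recr /= -/(wval L j) expnS.
have hj : (j L < b)%N := ltn_ord _.
move: IH hj; set q := (b ^ L)%N; set v := wval L j; set k := nat_of_ord (j L).
move=> IH hj; nia.
Qed.

Lemma val_eq n (i j : nat -> 'I_b) : (forall k, (k < n)%N -> i k = j k) -> wval n i = wval n j.
Proof. by move=> h; apply: eq_bigr => k _; rewrite h. Qed.

Definition shiftj (L : nat) (j : nat -> 'I_b) : nat -> 'I_b := fun k => j (k + L)%N.

Lemma val_add L n j : wval (L + n) j = (wval L j + b ^ L * wval n (shiftj L j))%N.
Proof.
rewrite /wval big_split_ord /=; congr (_ + _)%N.
rewrite big_distrr /=; apply: eq_bigr => i _.
by rewrite /shiftj expnD addnC mulnCA.
Qed.

Definition xpt (x : R) (n : nat) (j : nat -> 'I_b) : R :=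
  (x + (wval n j)%:R) / b%:R ^+ n.

Lemma S_termE x j n : S_term b gamma phi x j n = gamma ^+ n.-1 * phi (xpt x n j).
Proof.
rewrite /S_term /xpt /wval; congr (_ * phi ((x + _) / _)).
rewrite big_add1 /= big_mkord natr_sum; apply: eq_bigr => i _.
by rewrite natrM natrX.
Qed.

Lemma bpos : 0 < (b%:R : R).
Proof. by rewrite ltr0n. Qed.

Lemma xpt_add x L n j : xpt x (L + n) j = xpt (xpt x L j) n (shiftj L j).
Proof.
rewrite /xpt val_add natrD natrM natrX exprD.
have hb : (b%:R : R) ^+ L != 0 by rewrite expf_neq0 // gt_eqF // bpos.
have hb' : (b%:R : R) ^+ n != 0 by rewrite expf_neq0 // gt_eqF // bpos.
by field; apply/andP.
Qed.

Lemma term_add x L n j : (0 < n)%N ->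
  S_term b gamma phi x j (L + n) = gamma ^+ L * S_term b gamma phi (xpt x L j) (shiftj L j) n.
Proof.
case: n => // n _.
rewrite !S_termE xpt_add addnS /= exprD mulrA.
by [].
Qed.

Definition psum x j N := \sum_(1 <= n < N) S_term b gamma phi x j n.

Lemma psum_add x j L m :
  psum x j (L + m).+1 = psum x j L.+1 + gamma ^+ L * psum (xpt x L j) (shiftj L j) m.+1.
Proof.
rewrite /psum (big_cat_nat _ (n := L.+1)) //=; last by rewrite ltnS leq_addr.
congr (_ + _).
rewrite -{1}(add1n L) big_addn big_distrr /=.
have -> : ((L + m).+1 - L = m.+1)%N by rewrite -addnS addKn.
by apply: eq_big_nat => n /andP[hn _]; rewrite addnC term_add.
Qed.

Lemma xpt_01 x n j : 0 <= x <= 1 -> 0 <= xpt x n j <= 1.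
Proof.
move=> /andP[x0 x1]; rewrite /xpt.
have hb : 0 < (b%:R : R) ^+ n by rewrite exprn_gt0 // bpos.
apply/andP; split; first by rewrite divr_ge0 // ?addr_ge0 // ltW.
rewrite ler_pdivrMr // mul1r.
have h' : ((wval n j)%:R : R) + 1 <= (b%:R) ^+ n.
  by rewrite -natrX natr1 ler_nat val_lt.
lra.
Qed.

Definition Bphi := `|phi 0| + M.

Lemma phi_bound t : 0 <= t <= 1 -> `|phi t| <= Bphi.
Proof.
move=> /andP[t0 t1].
have h := Lip t 0; rewrite subr0 (ger0_norm t0) in h.
have h2 : `|phi t| <= `|phi t - phi 0| + `|phi 0|.
  by rewrite -[X in `|X| <= _](subrK (phi 0)) ler_normD.
rewrite /Bphi; have : M * t <= M by rewrite ler_piMr.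
lra.
Qed.

Lemma term_bound x j n : 0 <= x <= 1 -> `|S_term b gamma phi x j n| <= Bphi * gamma ^+ n.-1.
Proof.
move=> hx; have gg : 0 <= gamma ^+ n.-1 by rewrite exprn_ge0 // ltW.
by rewrite S_termE normrM (ger0_norm gg) mulrC ler_wpM2r // phi_bound // xpt_01.
Qed.

Lemma geo_eq N : (\sum_(1 <= n < N.+1) gamma ^+ n.-1) * (1 - gamma) = 1 - gamma ^+ N.
Proof.
elim: N => [|N IH]; first by rewrite big_geq // mul0r expr0 subrr.
rewrite big_nat_recr //= mulrDl IH exprS; ring.
Qed.

Lemma geo_sum N : \sum_(1 <= n < N) gamma ^+ n.-1 <= (1 - gamma)^-1.
Proof.
have hg : 0 < 1 - gamma by rewrite subr_gt0.
case: N => [|N]; first by rewrite big_geq // invr_ge0 ltW.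
rewrite -[(1 - gamma)^-1]mul1r ler_pdivlMr // geo_eq.
have : 0 <= gamma ^+ N by rewrite exprn_ge0 // ltW.
lra.
Qed.


Definition KS := Bphi / (1 - gamma).

Lemma Bphi_ge0 : 0 <= Bphi.
Proof. by rewrite /Bphi addr_ge0. Qed.

Lemma KS_ge0 : 0 <= KS.
Proof. by rewrite /KS divr_ge0 ?Bphi_ge0 // subr_ge0 ltW. Qed.

Lemma psum_abs x j N : 0 <= x <= 1 -> \sum_(1 <= n < N) `|S_term b gamma phi x j n| <= KS.
Proof.
move=> hx; apply: (@le_trans _ _ (\sum_(1 <= n < N) Bphi * gamma ^+ n.-1)).
  by apply: ler_sum => n _; apply: term_bound.
rewrite -big_distrr /= /KS; apply: ler_wpM2l; [exact: Bphi_ge0 | exact: geo_sum].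
Qed.

Lemma psum_cvg x j : 0 <= x <= 1 -> cvgn (psum x j).
Proof.
move=> hx.
pose u k := if k is 0 then 0 else S_term b gamma phi x j k.
have E : psum x j = series u.
  apply/funext => N; rewrite /series /= /psum.
  case: N => [|N]; first by rewrite !big_geq.
  rewrite big_ltn //= add0r; apply: eq_big_nat => n /andP[hn _].
  by case: n hn.
rewrite E; apply: normed_cvg.
apply: nondecreasing_is_cvgn.
  move=> m n mn; rewrite /normed_series_of !seriesEnat /=; move: m n mn; apply: nondecreasing_series => k _ _; exact: normr_ge0.
exists KS => _ [N _ <-]; rewrite /normed_series_of seriesEnat /=.
case: N => [|N]; first by rewrite big_geq // KS_ge0.
rewrite big_ltn //= normr0 add0r.
apply: le_trans (psum_abs x j N.+1 hx).
by rewrite le_eqVlt; apply/orP; left; apply/eqP; apply: eq_big_nat => n /andP[hn _]; case: n hn.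
Qed.

Lemma S_cvg x j : 0 <= x <= 1 -> psum x j @ \oo --> S b gamma phi x j.
Proof. by move=> hx; apply: psum_cvg. Qed.


Lemma S_split x j L : 0 <= x <= 1 ->
  S b gamma phi x j = psum x j L.+1 + gamma ^+ L * S b gamma phi (xpt x L j) (shiftj L j).
Proof.
move=> hx.
have h1 : (fun m => psum x j (L + m).+1) @ \oo --> S b gamma phi x j.
  have := S_cvg x j hx; rewrite -(cvg_shiftn L.+1).
  have -> : (fun m => psum x j (L + m).+1) = [sequence psum x j (m + L.+1)]_m.
    by apply/funext => m; rewrite /= addnS addnC.
  by [].
have h2 : (fun m => psum x j (L + m).+1) @ \oo -->
    psum x j L.+1 + gamma ^+ L * S b gamma phi (xpt x L j) (shiftj L j).
  have -> : (fun m => psum x j (L + m).+1) = (fun m => psum x j L.+1 +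
      gamma ^+ L * psum (xpt x L j) (shiftj L j) m.+1).
    by apply/funext => m; rewrite psum_add.
  apply: cvgD; first exact: cvg_cst.
  apply: (@cvgMl_tmp _ _ _ _ (fun m => psum (xpt x L j) (shiftj L j) m.+1)).
  have := S_cvg (xpt x L j) (shiftj L j) (xpt_01 x L j hx); rewrite -cvg_shiftS.
  by [].
exact: (cvg_unique (@Rhausdorff R) h1 h2).
Qed.

Lemma lim_bound (u : R ^nat) l K : u @ \oo --> l -> (forall n, `|u n| <= K) -> `|l| <= K.
Proof.
move=> hu hK; have hn : (fun n => `|u n|) @ \oo --> `|l| by apply: cvg_norm.
rewrite -(cvg_lim (@Rhausdorff R) hn); apply: limr_le.
  by apply/cvg_ex; exists `|l|.
by near=> n; exact: hK.
Unshelve. all: by end_near.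
Qed.

Lemma S_bound x j : 0 <= x <= 1 -> `|S b gamma phi x j| <= KS.
Proof.
move=> hx; apply: (@lim_bound (psum x j) _ _ (S_cvg x j hx)) => N.
by apply: le_trans (ler_norm_sum _ _ _) (psum_abs x j N hx).
Qed.

Lemma S_lip x x' j : 0 <= x <= 1 -> 0 <= x' <= 1 ->
  `|S b gamma phi x j - S b gamma phi x' j| <= M / (1 - gamma) * `|x - x'|.
Proof.
move=> hx hx'.
have hc : (psum x j - psum x' j) @ \oo --> S b gamma phi x j - S b gamma phi x' j.
  by apply: cvgB; [exact: S_cvg | exact: S_cvg].
apply: (@lim_bound (psum x j - psum x' j) _ _ hc) => N /=.
have key n : `|S_term b gamma phi x j n - S_term b gamma phi x' j n| <=
    M * `|x - x'| * gamma ^+ n.-1.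
  have gg : 0 <= gamma ^+ n.-1 by rewrite exprn_ge0 // ltW.
  rewrite !S_termE -mulrBr normrM (ger0_norm gg) mulrC ler_wpM2r //.
  apply: (le_trans (Lip (xpt x n j) (xpt x' n j))); apply: (ler_wpM2l M0).
  have hq : 1 <= (b%:R : R) ^+ n by rewrite exprn_ege1 // ler1n.
  have hq0 : 0 < (b%:R : R) ^+ n by apply: lt_le_trans hq.
  have -> : xpt x n j - xpt x' n j = (x - x') * ((b%:R : R) ^+ n)^-1.
    by rewrite /xpt; field; rewrite gt_eqF.
  have hi : 0 <= ((b%:R : R) ^+ n)^-1 by rewrite invr_ge0 ltW.
  rewrite normrM (ger0_norm hi).
  rewrite ler_piMr // ?normr_ge0 // invf_le1 //.
apply: (@le_trans _ _ (\sum_(1 <= n < N) M * `|x - x'| * gamma ^+ n.-1)).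
  rewrite /GRing.add /GRing.opp /= /psum -sumrB; apply: le_trans (ler_norm_sum _ _ _) _.
  by apply: ler_sum => n _; exact: key.
rewrite -big_distrr /=.
have -> : M / (1 - gamma) * `|x - x'| = M * `|x - x'| * (1 - gamma)^-1 by rewrite mulrAC.
apply: ler_wpM2l; [by rewrite mulr_ge0 | exact: geo_sum].
Qed.

Lemma psum_eq x (i j : nat -> 'I_b) L : (forall k, (k < L)%N -> i k = j k) ->
  psum x i L.+1 = psum x j L.+1.
Proof.
move=> h; apply: eq_big_nat => n /andP[_ hn]; rewrite !S_termE /xpt.
by rewrite (@val_eq n i j) // => k hk; apply: h; apply: leq_trans hk _.
Qed.

Lemma xpt_eq x (i j : nat -> 'I_b) L : (forall k, (k < L)%N -> i k = j k) ->
  xpt x L i = xpt x L j.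
Proof. by move=> h; rewrite /xpt (@val_eq L i j h). Qed.

Lemma S_agree x (i j : nat -> 'I_b) L : 0 <= x <= 1 -> (forall k, (k < L)%N -> i k = j k) ->
  `|S b gamma phi x i - S b gamma phi x j| <= 2 * KS * gamma ^+ L.
Proof.
move=> hx h; rewrite (S_split x i L hx) (S_split x j L hx) (@psum_eq x i j L h) (@xpt_eq x i j L h).
have gg : 0 <= gamma ^+ L by rewrite exprn_ge0 // ltW.
have -> : forall a u v : R, a + u - (a + v) = u - v by move=> *; ring.
rewrite -mulrBr normrM (ger0_norm gg) mulrC ler_wpM2r //.
apply: le_trans (ler_normB _ _) _.
have := S_bound _ (shiftj L i) (xpt_01 x L j hx); have := S_bound _ (shiftj L j) (xpt_01 x L j hx).
lra.
Qed.

Definition ins L (u t : nat -> 'I_b) : nat -> 'I_b :=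
  fun k => if (k < L)%N then u k else t (k - L)%N.

Lemma shift_ins L u t : shiftj L (ins L u t) = t.
Proof. by apply/funext => k; rewrite /shiftj /ins ltnNge leq_addl /= addnK. Qed.

Lemma S_ins x L u t : 0 <= x <= 1 ->
  S b gamma phi x (ins L u t) = psum x u L.+1 + gamma ^+ L * S b gamma phi (xpt x L u) t.
Proof.
move=> hx; have h : forall k, (k < L)%N -> ins L u t k = u k by move=> k hk; rewrite /ins hk.
by rewrite (S_split x _ L hx) shift_ins (@psum_eq x _ u L h) (@xpt_eq x _ u L h).
Qed.

End Analysis.
Arguments ins {c}.
Arguments wval {c}.
Arguments shiftj {c}.
Arguments xpt {R c}.
Arguments psum {R c}.


Section Meas.
Context (R : realType) (c : nat) (P : probability (Sigma c) R).
Hypothesis HP : is_uniform_product P.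
Local Notation b := c.+2.
Local Notation T := (Sigma c).

Definition cyl' (n : nat) (f : nat -> 'I_b) : set T :=
  [set j | forall k, (k < n)%N -> j k = f k].

Definition ext n (w : 'I_n -> 'I_b) : nat -> 'I_b :=
  fun k => match insub k with Some i => w i | None => ord0 end.
Arguments ext {n}.

Lemma extE n (w : 'I_n -> 'I_b) (i : 'I_n) : ext w i = w i.
Proof. by rewrite /ext valK. Qed.

Lemma ext_lt n (w : 'I_n -> 'I_b) k (hk : (k < n)%N) : ext w k = w (Ordinal hk).
Proof. by rewrite -[k]/(nat_of_ord (Ordinal hk)) extE. Qed.

Lemma cyl'_cylinder n f : cyl' n f = cylinder (fun k : 'I_n => f k).
Proof.
apply/seteqP; split => j /= h.
  by move=> k; apply: h.
by move=> k hk; apply: (h (Ordinal hk)).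
Qed.

Lemma cylinder_cyl' n (w : 'I_n -> 'I_b) : cylinder w = cyl' n (ext w).
Proof.
rewrite cyl'_cylinder; congr cylinder; apply/funext => i; by rewrite extE.
Qed.

Lemma cyl'_meas n f : measurable (cyl' n f).
Proof.
rewrite cyl'_cylinder; apply: sub_gen_smallest; by exists n, (fun k : 'I_n => f k).
Qed.

Lemma P_cyl' n f : P (cyl' n f) = ((b%:R : R) ^- n)%:E.
Proof. by rewrite cyl'_cylinder HP. Qed.

Lemma meas_dep N (D : set T) :
  (forall i j : T, (forall k, (k < N)%N -> i k = j k) -> D i -> D j) -> measurable D.
Proof.
move=> hD.
pose W : set {ffun 'I_N -> 'I_b} := [set w | exists2 j : T, D j & forall k : 'I_N, j k = w k].
have -> : D = \bigcup_(w in W) cyl' N (ext (fun k => w k)).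
  apply/seteqP; split => j.
    move=> Dj; exists [ffun k : 'I_N => j k].
      by exists j => // k; rewrite ffunE.
    by move=> k hk /=; rewrite ext_lt ffunE.
  move=> [w [j' Dj' hj'] hw]; apply: (hD j') => // k hk.
  by rewrite (hw k hk) ext_lt -hj'.
apply: fin_bigcup_measurable; first exact: finite_finset.
by move=> w _; exact: cyl'_meas.
Qed.


Lemma cylI_agree n m f g : (forall k, (k < n)%N -> (k < m)%N -> f k = g k) ->
  cyl' n f `&` cyl' m g = cyl' (maxn n m) (fun k => if (k < n)%N then f k else g k).
Proof.
move=> h; apply/seteqP; split => j /=.
  move=> [h1 h2] k hk; case: ifP => hkn; first exact: h1.
  by apply: h2; move: hk; rewrite leq_max hkn.
move=> h0; split => k hk.
  by have := h0 k; rewrite leq_max hk /=; apply.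
case hkn: (k < n)%N.
  have := h0 k; rewrite leq_max hkn /= => -> //; exact: h.
by have := h0 k; rewrite leq_max hk orbT hkn; apply.
Qed.

Lemma cylI_disj n m f g : ~ (forall k, (k < n)%N -> (k < m)%N -> f k = g k) ->
  cyl' n f `&` cyl' m g = set0.
Proof.
move=> h; apply/seteqP; split => // j [h1 h2]; apply: h => k hkn hkm.
by rewrite -h1 // -h2.
Qed.

Lemma ins_pre_agree L u n f : (forall k, (k < n)%N -> (k < L)%N -> u k = f k) ->
  ins L u @^-1` (cyl' n f) = cyl' (n - L) (fun k => f (k + L)%N).
Proof.
move=> h; apply/seteqP; split => t /=.
  move=> ht k hk; have := ht (k + L)%N; rewrite /ins [(k + L < L)%N]ltnNge leq_addl /= addnK; apply.
  lia.
move=> ht k hk; rewrite /ins; case: ifP => hkL; first by rewrite h.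
have hLk : (L <= k)%N by rewrite leqNgt hkL.
have := ht (k - L)%N; rewrite subnK //; apply; lia.
Qed.

Lemma ins_pre_disj L u n f : ~ (forall k, (k < n)%N -> (k < L)%N -> u k = f k) ->
  ins L u @^-1` (cyl' n f) = set0.
Proof.
move=> h; apply/seteqP; split => // t ht; apply: h => k hkn hkL.
by have := ht k hkn; rewrite /ins hkL.
Qed.

Lemma ins_meas L u : measurable_fun setT (ins L u : T -> T).
Proof.
apply: (@measurability _ _ T T setT (ins L u) (@cylinders b)) => //.
move=> _ [C [n [w ->]] <-]; rewrite setTI cylinder_cyl'.
case: (pselect (forall k, (k < n)%N -> (k < L)%N -> u k = ext w k)) => h.
  by rewrite ins_pre_agree //; exact: cyl'_meas.
by rewrite ins_pre_disj.
Qed.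


Definition Gc : set (set T) := [set C | cylinders C \/ C = set0].

Lemma mG : @measurable _ T = <<s Gc >>.
Proof.
apply/seteqP; split.
  apply: smallest_sub; first exact: smallest_sigma_algebra.
  by move=> C hC; apply: sub_gen_smallest; left.
apply: smallest_sub; first exact: sigma_algebra_measurable.
move=> C [hC|->]; last exact: measurable0.
exact: sub_gen_smallest.
Qed.

Lemma cyl'_G n f : Gc (cyl' n f).
Proof. by left; rewrite cyl'_cylinder; exists n, (fun k : 'I_n => f k). Qed.

Lemma setIG : setI_closed Gc.
Proof.
move=> A B [[n [w ->]]|->] [[m [v ->]]|->]; rewrite ?set0I ?setI0; try by right.
rewrite !cylinder_cyl'.
case: (pselect (forall k, (k < n)%N -> (k < m)%N -> ext w k = ext v k)) => h.
  by rewrite cylI_agree //; exact: cyl'_G.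
by rewrite cylI_disj //; right.
Qed.

Lemma GT : Gc setT.
Proof.
have -> : (setT : set T) = cyl' 0 (fun _ => ord0) by apply/seteqP; split.
exact: cyl'_G.
Qed.

Section insP.
Variables (L : nat) (u : nat -> 'I_b).

Definition insP : set T -> \bar R := fun E => P (ins L u @^-1` E).

Let mf := ins_meas L u.

Let insP0 : insP set0 = 0%E.
Proof. by rewrite /insP preimage_set0 measure0. Qed.

Let insP_ge0 A : (0 <= insP A)%E.
Proof. exact: measure_ge0. Qed.

Let insP_sigma_additive : semi_sigma_additive insP.
Proof.
move=> F mF tF mUF; rewrite /insP preimage_bigcup.
apply: measure_semi_sigma_additive.
- by move=> n; rewrite -[X in measurable X]setTI; exact: mf.
- apply/trivIsetP => /= i j _ _ ij; rewrite -preimage_setI.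
  by move/trivIsetP : tF => /(_ _ _ _ _ ij) ->//; rewrite preimage_set0.
- by rewrite -preimage_bigcup -[X in measurable X]setTI; exact: mf.
Qed.

HB.instance Definition _ := isMeasure.Build _ _ _ insP insP0 insP_ge0 insP_sigma_additive.

Definition rsP : set T -> \bar R := fun E => (((b%:R : R) ^+ L)%:E * P (E `&` cyl' L u))%E.

Let rsP0 : rsP set0 = 0%E.
Proof. by rewrite /rsP set0I measure0 mule0. Qed.

Let rsP_ge0 A : (0 <= rsP A)%E.
Proof. by rewrite /rsP mule_ge0 // lee_fin exprn_ge0. Qed.

Let rsP_sigma_additive : semi_sigma_additive rsP.
Proof.
move=> F mF tF mUF; rewrite /rsP.
rewrite [X in X @ \oo --> _](_ : _ =
    (fun n => (((b%:R : R) ^+ L)%:E * \sum_(0 <= i < n) P (F i `&` cyl' L u))%E)); last first.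
  by apply/funext => k; rewrite ge0_sume_distrr // => i _; exact: measure_ge0.
apply: cvgeZl => //; rewrite setI_bigcupl.
apply: measure_semi_sigma_additive.
- by move=> n; apply: measurableI => //; exact: cyl'_meas.
- apply/trivIsetP => /= i j _ _ ij.
  by rewrite setIACA; move/trivIsetP : tF => /(_ _ _ _ _ ij) ->//; rewrite set0I.
- by rewrite -setI_bigcupl; apply: measurableI => //; exact: cyl'_meas.
Qed.

HB.instance Definition _ := isMeasure.Build _ _ _ rsP rsP0 rsP_ge0 rsP_sigma_additive.

End insP.


Lemma bpowV_eq n L : (b%:R : R) ^- (n - L) = (b%:R : R) ^+ L * (b%:R : R) ^- (maxn n L).
Proof.
have hb : (b%:R : R) != 0 by rewrite pnatr_eq0.
rewrite maxnC maxnE exprD invfM mulrA mulfV ?mul1r //.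
Qed.

Lemma SH L u (E : set T) : measurable E ->
  P (ins L u @^-1` E) = (((b%:R : R) ^+ L)%:E * P (E `&` cyl' L u))%E.
Proof.
move=> mE.
have m1m2 : forall A, Gc A -> insP L u A = rsP L u A.
  move=> A [[n [w ->]]|->]; last first.
    by rewrite /insP /rsP preimage_set0 set0I !measure0 mule0.
  rewrite /insP /rsP cylinder_cyl'.
  case: (pselect (forall k, (k < n)%N -> (k < L)%N -> u k = ext w k)) => h.
    rewrite ins_pre_agree // cylI_agree; last by move=> k h1 h2; rewrite h.
    by rewrite !P_cyl' -EFinM bpowV_eq.
  rewrite ins_pre_disj // cylI_disj ?measure0 ?mule0 //.
  by move=> h'; apply: h => k h1 h2; rewrite h'.
have fin : forall k : nat, (insP L u ((fun _ => setT) k) < +oo)%E.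
  by move=> k; rewrite /insP preimage_setT probability_setT ltey.
have cover : \bigcup_(k : nat) (fun _ : nat => (setT : set T)) k = setT.
  by rewrite bigcup_const.
exact: (measure_unique Gc (fun _ => setT) mG setIG (fun _ => GT) cover
  (insP L u) (rsP L u) m1m2 fin E mE).
Qed.

Lemma Ppartition N (E : set T) : measurable E ->
  P E = (\sum_(w \in [set: {ffun 'I_N -> 'I_b}]) P (E `&` cyl' N (ext (fun k => w k))))%E.
Proof.
move=> mE; rewrite -measure_fin_bigcup //.
- apply: f_equal; apply/seteqP; split => j.
    move=> Ej; exists [ffun k : 'I_N => j k] => //; split => // k hk.
    by rewrite ext_lt ffunE.
  by move=> [w _ []].
- exact: finite_finset.
- move=> w1 w2 _ _ [j [[_ h1] [_ h2]]]; apply/ffunP => k.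
  have := h1 k (ltn_ord k); have := h2 k (ltn_ord k); rewrite !ext_lt.
  have -> : Ordinal (ltn_ord k) = k by apply: val_inj.
  by move=> <- <-.
- by move=> w _; apply: measurableI => //; exact: cyl'_meas.
Qed.

End Meas.


Lemma small_zero (R : realType) (a C q : R) : `|q| < 1 -> (forall N, `|a| <= C * q ^+ N) -> a = 0.
Proof.
move=> hq h.
have hc : (fun N => C * q ^+ N) @ \oo --> 0.
  rewrite -(mulr0 C); apply: (@cvgMl_tmp _ _ _ _ (fun N => q ^+ N)); exact: cvg_expr.
have : `|a| <= 0.
  rewrite -(cvg_lim (@Rhausdorff R) hc); apply: limr_ge; first by apply/cvg_ex; exists 0.
  by near=> N; exact: h.
by rewrite normr_le0 => /eqP.
Unshelve. all: by end_near.
Qed.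

Section Main.
Context (R : realType) (c : nat) (gamma : R) (phi : R -> R) (M : R).
Hypothesis g0 : 0 < gamma.
Hypothesis g1 : gamma < 1.
Hypothesis M0 : 0 <= M.
Hypothesis Lip : forall u v, `|phi u - phi v| <= M * `|u - v|.
Context (P : probability (Sigma c) R).
Hypothesis HP : is_uniform_product P.
Context (x y : R).
Hypothesis hx : 0 <= x <= 1.

Local Notation b := c.+2.
Local Notation T := (Sigma c).
Local Notation SS := (S b gamma phi).

Definition Aset : set T := [set j | SS x j = y].

Definition U N : set T := [set j | exists2 j' : T, Aset j' & forall k, (k < N)%N -> j k = j' k].

Lemma U_meas N : measurable (U N).
Proof.
apply: (@meas_dep c N) => i j hij [j' hj' hk]; exists j' => // k hkN.
by rewrite -hij //; exact: hk.
Qed.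

Lemma A_eq : Aset = \bigcap_N U N.
Proof.
apply/seteqP; split => j.
  by move=> Aj N _; exists j.
move=> hj; rewrite /Aset /=.
have : SS x j - y = 0.
  apply: (@small_zero _ _ (2 * KS R gamma phi M) gamma); first by rewrite ger0_norm ?ltW.
  move=> N; have [j' Aj' hk] := hj N I.
  rewrite -Aj'; exact: (@S_agree R c gamma phi M g0 g1 M0 Lip x j j' N hx hk).
by move/eqP; rewrite subr_eq0 => /eqP.
Qed.

Lemma A_meas : measurable Aset.
Proof. by rewrite A_eq; apply: bigcapT_measurable => N; exact: U_meas. Qed.

Lemma L1 (e : R) : 0 < e -> (0 < P Aset)%E ->
  exists N (w : nat -> 'I_b), (P (cyl' c N w `\` Aset) <= (e * (b%:R ^- N))%:E)%E.
Proof.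
move=> he hA.
apply: contrapT => hne.
have hgt : forall N (w : {ffun 'I_N -> 'I_b}),
    ((e * (b%:R ^- N))%:E < P (cyl' c N (ext c N (fun k => w k)) `\` Aset))%E.
  move=> N w; rewrite ltNge; apply/negP => hle; apply: hne.
  by exists N, (ext c N (fun k => w k)).
pose D N := U N `\` Aset.
have mD N : measurable (D N) by apply: measurableD; [exact: U_meas | exact: A_meas].
have Dle N : (e%:E * P Aset <= P (D N))%E.
  apply: (@le_trans _ _ (e%:E * P (U N))%E).
    apply: lee_wpmul2l; first by rewrite lee_fin ltW.
    apply: le_measure; rewrite ?inE; [exact: A_meas | exact: U_meas | by move=> j Aj; exists j].
  rewrite (@Ppartition R c P N _ (U_meas N)) (@Ppartition R c P N _ (mD N)) ge0_mule_fsumr; last first.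
    by move=> w; exact: measure_ge0.
  apply: lee_fsum; first exact: finite_finset.
  move=> w _; set C := cyl' c N _.
  case: (pselect (exists j, (U N `&` C) j)) => [[j0 [Uj0 Cj0]]|hno].
    have CU : C `<=` U N.
      move=> j Cj; case: Uj0 => j' Aj' hj'; exists j' => // k hk.
      by rewrite -hj' // Cj // Cj0.
    have -> : U N `&` C = C by apply/setIidr.
    have -> : D N `&` C = C `\` Aset.
      apply/seteqP; split => j; first by move=> [[_ nA] Cj].
      by move=> [Cj nA]; split => //; split => //; apply: CU.
    rewrite /C P_cyl' // -EFinM; exact: ltW (hgt N w).
  have -> : U N `&` C = set0 by apply/seteqP; split => // j hj; apply: hno; exists j.
  by rewrite measure0 mule0; exact: measure_ge0.
have cv : (P \o D) @ \oo --> P (\bigcap_N D N).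
  apply: nonincreasing_cvg_mu.
  - by rewrite (le_lt_trans (probability_le1 _ (mD 0%N))) // ltey.
  - exact: mD.
  - by apply: bigcapT_measurable.
  - move=> m n mn; apply/subsetPset => j [[j' Aj' hj'] nA]; split => //.
    by exists j' => // k hk; apply: hj'; apply: leq_trans hk mn.
have bigcap0 : \bigcap_N D N = set0.
  apply/seteqP; split => // j hj.
  have Aj : Aset j by rewrite A_eq => N _; have [] := hj N I.
  by have [_ ] := hj 0%N I.
rewrite bigcap0 measure0 in cv.
have : (e%:E * P Aset <= 0)%E by apply: (cvge_to_ge cv); near=> N; exact: Dle.
by rewrite leNgt mule_gt0 ?lte_fin.
Unshelve. all: by end_near.
Qed.


Lemma union_bound (V : finType) (F : V -> set T) (d : R) : 0 <= d ->
  (forall v, measurable (F v)) -> (forall v, (P (F v) <= d%:E)%E) ->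
  (P (\bigcup_(v in [set: V]) F v) <= (#|V|%:R * d)%:E)%E.
Proof.
move=> d0 mF hF.
pose F' (k : nat) : set T := if insub k is Some i then F (enum_val (i : 'I_#|V|)) else set0.
have mF' k : measurable (F' k) by rewrite /F'; case: insub => [i|] //; exact: mF.
apply: (@le_trans _ _ (\sum_(k < #|V|) P (F' k))%E).
  apply: content_subadditive => //.
    by apply: fin_bigcup_measurable; [exact: finite_finset | move=> v _; exact: mF].
  move=> j [v _ Fvj]; rewrite -bigcup_mkord; exists (enum_rank v) => //=.
  by rewrite /F' valK enum_rankK.
apply: (@le_trans _ _ (\sum_(k < #|V|) d%:E)%E).
  apply: lee_sum => k _; rewrite /F'; case: insub => [i|]; first exact: hF.
  by rewrite measure0 lee_fin.
by rewrite sumEFin lee_fin sumr_const card_ord mulr_natl.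
Qed.

Lemma digits k m : (m < b ^ k)%N -> exists f : nat -> 'I_b, wval k f = m.
Proof.
elim: k m => [|k IH] m hm.
  exists (fun _ => ord0); move: hm; rewrite expn0 ltnS leqn0 => /eqP ->.
  by rewrite /wval big_ord0.
have hb : (0 < b)%N by [].
have hq : (m %/ b < b ^ k)%N by rewrite ltn_divLR // -expnSr.
have [g hg] := IH (m %/ b)%N hq.
pose f n := if n is n'.+1 then g n' else Ordinal (ltn_pmod m hb).
exists f; rewrite -add1n val_add.
have -> : shiftj 1 f = g by apply/funext => n; rewrite /shiftj addn1.
rewrite hg /wval big_ord1 /= expn0 muln1 expn1.
by rewrite mulnC addnC -divn_eq.
Qed.

Lemma grid n (r : R) : -1 <= r <= n.+1%:R -> exists2 m : nat, (m <= n)%N & `|r - m%:R| <= 1.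
Proof.
elim: n r => [|n IH] r /andP[h1 h2].
  exists 0%N => //; rewrite subr0 ler_norml h1 /=; exact: h2.
case: (lerP r n.+1%:R) => hr.
  have h3 : -1 <= r <= n.+1%:R by rewrite h1 hr.
  by have [m hm hm'] := IH r h3; exists m => //; exact: leqW.
exists n.+1 => //; rewrite -natr1 in h2; rewrite ler_norml; apply/andP; split; lra.
Qed.

Lemma approx (z x' : R) k : 0 <= z <= 1 -> 0 <= x' <= 1 ->
  exists f : nat -> 'I_b, `|z - xpt x' k f| <= b%:R ^- k.
Proof.
move=> /andP[z0 z1] /andP[x0 x1].
have hq : 0 < (b%:R : R) ^+ k by rewrite exprn_gt0 // ltr0n.
have hbk : (0 < b ^ k)%N by rewrite expn_gt0.
have hr : -1 <= z * b%:R ^+ k - x' <= ((b ^ k).-1).+1%:R.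
  rewrite prednK // natrX; apply/andP; split.
    have : 0 <= z * b%:R ^+ k by rewrite mulr_ge0 // ltW.
    lra.
  have : z * b%:R ^+ k <= b%:R ^+ k by rewrite ler_piMl // ltW.
  lra.
have [m hm hm'] := @grid _ _ hr.
have hm2 : (m < b ^ k)%N by move: hm; rewrite -ltnS prednK.
have [f hf] := @digits k m hm2.
exists f; rewrite /xpt hf.
have -> : z - (x' + m%:R) / b%:R ^+ k = (z * b%:R ^+ k - x' - m%:R) / b%:R ^+ k.
  by field; rewrite gt_eqF.
rewrite normrM normfV (ger0_norm (ltW hq)) -[X in _ <= X]mul1r.
apply: ler_wpM2r; [by rewrite invr_ge0 ltW | exact: hm'].
Qed.


Lemma no_atom_aux : condH b gamma phi -> (0 < P Aset)%E -> False.
Proof.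
move=> hH hA.
have hbn : forall n, (b%:R : R) ^+ n != 0 by move=> n; rewrite expf_neq0 // pnatr_eq0.
pose eps (k : nat) : R := (1 / (2 ^ (k + 2))%:R) / (b%:R ^+ k * b%:R ^+ k).
have eps0 k : 0 < eps k.
  by rewrite /eps divr_gt0.
have hch : forall k : nat, exists p : nat * (nat -> 'I_b),
    (P (cyl' c p.1 p.2 `\` Aset) <= (eps k * (b%:R ^- p.1))%:E)%E.
  move=> k; have [N [w hw]] := @L1 (eps k) (eps0 k) hA; by exists (N, w).
have [pf hpf] := choice hch.
pose Nf k := (pf k).1.
pose wf k := (pf k).2.
pose u k (v : {ffun 'I_k -> 'I_b}) := ins (Nf k) (wf k) (ext c k (fun i => v i)).
pose Gk k : set T := [set t | forall v : {ffun 'I_k -> 'I_b}, Aset (ins (Nf k + k) (u k v) t)].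
have Gc_eq k : ~` Gk k = \bigcup_(v in [set: {ffun 'I_k -> 'I_b}])
    (ins (Nf k + k) (u k v) @^-1` (~` Aset)).
  apply/seteqP; split => t.
    move=> /= nG; apply: contrapT => hno; apply: nG => v; apply: contrapT => nA.
    by apply: hno; exists v.
  by move=> [v _ nA] hG; apply: nA; apply: hG.
have mpre k (v : {ffun 'I_k -> 'I_b}) : measurable ((ins (Nf k + k) (u k v) : T -> T) @^-1` (~` Aset)).
  rewrite -[X in measurable X]setTI; apply: (@ins_meas c) => //; exact: measurableC A_meas.
have mGc k : measurable (~` Gk k).
  rewrite Gc_eq; apply: fin_bigcup_measurable; first exact: finite_finset.
  by move=> v _; exact: mpre.
have PGc k : (P (~` Gk k) <= (1 / (2 ^ (k + 2))%:R)%:E)%E.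
  rewrite Gc_eq.
  have hd0 : 0 <= b%:R ^+ k * eps k by rewrite mulr_ge0 ?exprn_ge0 // ltW.
  apply: (le_trans (@union_bound _ _ _ hd0 (mpre k) _)).
    move=> v; rewrite (@SH R c P HP _ _ _ (measurableC A_meas)).
    apply: (@le_trans _ _ (((b%:R : R) ^+ (Nf k + k))%:E * P (cyl' c (Nf k) (wf k) `\` Aset))%E).
      apply: lee_wpmul2l; first by rewrite lee_fin exprn_ge0.
      apply: le_measure; rewrite ?inE.
      - by apply: measurableI; [exact: measurableC A_meas | exact: cyl'_meas].
      - by apply: measurableD; [exact: cyl'_meas | exact: A_meas].
      - move=> j [nA Cj]; split => // k' hk'; rewrite Cj; last by lia.
        by rewrite /u /ins hk'.
    apply: (@le_trans _ _ (((b%:R : R) ^+ (Nf k + k))%:E * (eps k * (b%:R ^- Nf k))%:E)%E).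
      apply: lee_wpmul2l; first by rewrite lee_fin exprn_ge0.
      exact: hpf k.
    rewrite -EFinM lee_fin exprD le_eqVlt; apply/orP; left; apply/eqP.
    by field; rewrite hbn.
  rewrite card_ffun !card_ord natrX lee_fin /eps le_eqVlt; apply/orP; left; apply/eqP.
  by field; rewrite hbn /= pnatr_eq0 expn_eq0.
pose G := \bigcap_k Gk k.
have mG' : measurable G.
  apply: bigcapT_measurable => k; rewrite -(setCK (Gk k)); exact: measurableC (mGc k).
have PGc2 : (P (~` G) <= (1 / 2)%:E)%E.
  apply: (@le_trans _ _ (\sum_(k <oo) P (~` Gk k))%E).
    apply: measure_sigma_subadditive => //; first exact: measurableC mG'.
    move=> t nG; apply: contrapT => hno; apply: nG => k _; apply: contrapT => nk.
    by apply: hno; exists k.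
  apply: (@le_trans _ _ (\sum_(k <oo) ((1 / (2 ^ (k + 2))%:R)%:E))%E).
    by apply: lee_nneseries; [move=> k _ _; exact: measure_ge0 | move=> k _; exact: PGc].
  rewrite le_eqVlt; apply/orP; left; apply/eqP.
  have h := @cvg_geometric_eseries_half R 1 1.
  by rewrite -(cvg_lim (@ereal_hausdorff R) h).
have hfin : P G \is a fin_num.
  rewrite ge0_fin_numE ?measure_ge0 //; apply: le_lt_trans (probability_le1 P mG') _.
  exact: ltey.
have PG : ((1 / 2)%:E <= P G)%E.
  move: PGc2; rewrite probability_setC // -(fineK hfin) -EFinB !lee_fin => h.
  lra.
have [i Gi] : exists i, G i.
  apply: contrapT => hno.
  have G0 : G = set0 by apply/seteqP; split => // t Gt; apply: hno; exists t.
  by move: PG; rewrite G0 measure0 lee_fin; lra.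
have [j [Gj hji]] : exists j, G j /\ j <> i.
  apply: contrapT => hno.
  have sub : G `<=` cyl' c 2 i.
    move=> t Gt k _; have -> // : t = i.
    by apply: contrapT => ne; apply: hno; exists t.
  have := le_measure P _ _ sub; rewrite ?inE => /(_ mG' (cyl'_meas c 2 i)).
  move=> hle0; have hc := @P_cyl' R c P HP 2 i.
  have hle : (P G <= ((b%:R : R) ^- 2)%:E)%E by rewrite -hc.
  have hb2 : 2 <= (b%:R : R) by rewrite ler_nat.
  have hb4 : 4 <= (b%:R : R) ^+ 2 by rewrite expr2; nra.
  have : (b%:R : R) ^- 2 <= 4^-1.
    by rewrite lef_pV2 ?posrE // ?exprn_gt0 //; lra.
  have := le_trans PG hle; rewrite lee_fin => h1 h2.
  have : (1 / 2 : R) <= 4^-1 by apply: le_trans h1 h2.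
  lra.
have [z hz hzne] := hH i j (fun e => hji (esym e)).
apply: (negP hzne); apply/eqP.
apply: (@small_zero _ _ (2 * (M / (1 - gamma))) (b%:R^-1)).
  by rewrite ger0_norm ?invr_ge0 ?ler0n // invf_lt1 ?ltr0n // ltr1n.
move=> k.
have xk01 : 0 <= xpt x (Nf k) (wf k) <= 1 by apply: (@xpt_01 R c gamma M g0 g1 M0).
have [f hf] := @approx z _ k hz xk01.
pose v : {ffun 'I_k -> 'I_b} := [ffun t : 'I_k => f t].
pose p := xpt x (Nf k + k) (u k v).
have hp : p = xpt (xpt x (Nf k) (wf k)) k f.
  rewrite /p xpt_add.
  rewrite (@xpt_eq R c x (u k v) (wf k) (Nf k)); last by move=> k' hk'; rewrite /u /ins hk'.
  rewrite /u shift_ins; apply: xpt_eq => k' hk'; by rewrite ext_lt ffunE.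
have p01 : 0 <= p <= 1 by rewrite hp; apply: (@xpt_01 R c gamma M g0 g1 M0).
have eqS : SS p i = SS p j.
  have Ai := Gi k I v; have Aj := Gj k I v.
  move: Ai Aj; rewrite /Aset /= !(@S_ins R c gamma phi M g0 g1 M0 Lip x _ _ _ hx) -/p => Ai Aj.
  have gL : gamma ^+ (Nf k + k) != 0 by rewrite expf_neq0 // gt_eqF.
  by move: Ai; rewrite -Aj => /addrI /(mulfI gL).
have l1 := @S_lip R c gamma phi M g0 g1 M0 Lip z p i hz p01.
have l2 := @S_lip R c gamma phi M g0 g1 M0 Lip z p j hz p01.
have hzp : `|z - p| <= b%:R ^- k by rewrite hp.
have hK : 0 <= M / (1 - gamma) by rewrite divr_ge0 // subr_ge0 ltW.
have e1 : M / (1 - gamma) * `|z - p| <= M / (1 - gamma) * b%:R ^- k by apply: ler_wpM2l.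
have -> : SS z j - SS z i = (SS z j - SS p j) - (SS z i - SS p i) by rewrite eqS; ring.
rewrite exprVn; apply: le_trans (ler_normB _ _) _.
lra.
Qed.

End Main.


(* The base is b = c.+2, i.e. an arbitrary integer b >= 2. *)
Theorem lemma5p3 (R : realType) (c : nat) (gamma : R) (phi : R -> R)
  (P : probability (Sigma c) R) :
  0 < gamma < 1 ->
  periodic1 phi -> lipschitz phi -> condH c.+2 gamma phi ->
  is_uniform_product P ->
  forall x : R, 0 <= x <= 1 ->
    forall y : R, m_x c gamma phi P x [set y] = 0%E.
Proof.
move=> /andP[g0 g1] _ hlip hH HP x hx y.
have [M [M0 Lip]] : exists M : R, 0 <= M /\ forall u v, `|phi u - phi v| <= M * `|u - v|.
  move: hlip => [M1 [_ hM]].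
  have hlt : M1 < `|M1| + 1 by have := ler_norm M1; lra.
  exists (`|M1| + 1); split; first by rewrite addr_ge0.
  move=> u v; have := hM _ hlt (u, v); apply; by [].
have h := @no_atom_aux R c gamma phi M g0 g1 M0 Lip P HP x y hx hH.
rewrite /m_x /pushforward; apply/eqP; rewrite eq_le measure_ge0 andbT leNgt.
by apply/negP => hpos; exact: h hpos.
Qed.
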